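(* Let $t\in T_2$, write $xy$ for $t(x,y)$, let $\mathcal{T}_t$ be the variety defined by $t(x,y)=x$, and let $A=X\mathcal{T}_t^{\,p}$ be the free $\mathcal{T}_t^{\,p}$-algebra over a set $X$, written as the semilattice sum $A=\bigsqcup_{s\in S}A_s$ of its semilattice replica classes $A_s$ (each in $\mathcal{T}_t$) over $S=A/\varrho\cong X\mathcal{S}$. Let $\theta$ be a congruence of $A$, and suppose $(a'_r,b'_s)\in\theta$ for some $r,s\in S$, $a'_r\in A_r$, $b'_s\in A_s$. Then for every $a_r\in A_r$ and every $b_s\in A_s$, $(b_s,\,b_sa_r)\in\theta$.
   Context: $\Omega$-algebras are of a plural similarity type (no nullary operation symbols, at least one operation symbol of arity $\ge2$). $T_n$ is the set of $\Omega$-terms in $x_1,\dots,x_n$ in which all $n$ variables occur. An identity is regular if the same variables occur on both sides. $\mathcal{S}$ is the variety of $\Omega$-algebras satisfying all regular identities; the semilattice replica congruence $\varrho$ of $A$ is the smallest congruence with $A/\varrho\in\mathcal{S}$. Prolongation: for an identity $\sigma$ of the form $u(y_1,\dots,y_n)=v(y_1,\dots,y_n)$ and $m\ge1$, $\sigma^p_m$ is the set of identities $u(r_1,\dots,r_n)=v(r_1,\dots,r_n)$ obtained by substituting $r_i(x_1,\dots,x_m)$ for $y_i$, with $r_i$ ranging over $T_m$; $\sigma^p=\bigcup_m\sigma^p_m$; $\Sigma^p=\bigcup_{\sigma\in\Sigma}\sigma^p$. $\mathcal{V}^p$ is the variety defined by $\mathrm{Id}(\mathcal{V})^p$, where $\mathrm{Id}(\mathcal{V})$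 is the set of all identities of $\mathcal{V}$. (It is known that the $\varrho$-classes of $X\mathcal{T}_t^{\,p}$ lie in $\mathcal{T}_t$ and $A/\varrho$ is the free semilattice on $X$.) *)

(* Defs.v *)
From mathcomp Require Import all_boot.
Set Implicit Arguments.
Unset Strict Implicit.
Unset Printing Implicit Defensive.

Record signature := Signature { op : Type; arity : op -> nat }.

Definition plural (S : signature) : Prop :=
  (forall o : op S, 0 < arity o) /\ exists o : op S, 1 < arity o.

Inductive term (S : signature) (V : Type) : Type :=
| Var : V -> term S V
| App : forall o : op S, ('I_(arity o) -> term S V) -> term S V.
Arguments Var {S V}.
Arguments App {S V}.

Fixpoint occurs (S : signature) (V : Type) (x : V) (u : term S V) : Prop :=
  match u with
  | Var y => x = y
  | App o f => exists i, occurs x (f i)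
  end.

(** T_n : terms in x_1..x_n (here indexed by 'I_n) in which all variables occur. *)
Definition in_T (S : signature) (n : nat) (u : term S 'I_n) : Prop :=
  forall i : 'I_n, occurs i u.

Fixpoint subst (S : signature) (V W : Type) (g : V -> term S W) (u : term S V)
  : term S W :=
  match u with
  | Var x => g x
  | App o f => App o (fun i => subst g (f i))
  end.

Record algebra (S : signature) := Algebra {
  carrier :> Type;
  ops : forall o : op S, ('I_(arity o) -> carrier) -> carrier }.

Fixpoint eval (S : signature) (A : algebra S) (V : Type) (g : V -> A)
  (u : term S V) : A :=
  match u with
  | Var x => g x
  | App o f => @ops S A o (fun i => eval g (f i))
  end.

Definition identity (S : signature) := (term S nat * term S nat)%type.

Definition satisfies (S : signature) (A : algebra S) (e : identity S) : Prop :=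
  forall g : nat -> A, eval g e.1 = eval g e.2.

Definition models (S : signature) (Sigma : identity S -> Prop) (A : algebra S)
  : Prop := forall e, Sigma e -> satisfies A e.

Definition emb (S : signature) (m : nat) (u : term S 'I_m) : term S nat :=
  subst (fun i : 'I_m => Var (nat_of_ord i)) u.

(** The identity t(x,y) = x, with x = variable 0, y = variable 1. *)
Definition tid (S : signature) (t : term S 'I_2) : identity S :=
  (emb t, Var 0).

Definition Id_T (S : signature) (t : term S 'I_2) (e : identity S) : Prop :=
  forall B : algebra S, satisfies B (tid t) -> satisfies B e.

Definition prolong (S : signature) (Sigma : identity S -> Prop)
  (e : identity S) : Prop :=
  exists sigma, Sigma sigma /\
  exists m : nat, 0 < m /\
  exists r : nat -> term S 'I_m, (forall i, in_T (r i)) /\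
    e = (emb (subst r sigma.1), emb (subst r sigma.2)).

Definition in_Tp (S : signature) (t : term S 'I_2) (B : algebra S) : Prop :=
  models (prolong (Id_T t)) B.

(** The free T_t^p-algebra X T_t^p is the term algebra over X modulo
    [free_eq t]; we work with it as a setoid on [term S X]. *)
Definition free_eq (S : signature) (t : term S 'I_2) (X : Type)
  (u v : term S X) : Prop :=
  forall B : algebra S, in_Tp t B -> forall g : X -> B, eval g u = eval g v.

(** Congruences of A = X T_t^p, as relations on representing terms. *)
Definition is_cong (S : signature) (t : term S 'I_2) (X : Type)
  (th : term S X -> term S X -> Prop) : Prop :=
  [/\ (forall u, th u u),
      (forall u v, th u v -> th v u),
      (forall u v w, th u v -> th v w -> th u w),
      (forall u v, free_eq t u v -> th u v)
    & (forall o (f g : 'I_(arity o) -> term S X),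
         (forall i, th (f i) (g i)) -> th (App o f) (App o g))].

Definition regular (S : signature) (e : identity S) : Prop :=
  forall x : nat, occurs x e.1 <-> occurs x e.2.

Definition quot_in_S (S : signature) (X : Type)
  (th : term S X -> term S X -> Prop) : Prop :=
  forall e : identity S, regular e ->
    forall g : nat -> term S X, th (subst g e.1) (subst g e.2).

Definition rho (S : signature) (t : term S 'I_2) (X : Type) (u v : term S X)
  : Prop :=
  forall th, is_cong t th -> quot_in_S th -> th u v.

Definition tapp (S : signature) (t : term S 'I_2) (X : Type) (x y : term S X)
  : term S X :=
  subst (fun i : 'I_2 => if nat_of_ord i == 0 then x else y) t.

(* Main.v *)
Require Import Defs.
From mathcomp Require Import all_boot.
From HB Require Import structures.
From Stdlib Require Import ClassicalEpsilon PropExtensionality FunctionalExtensionality.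
Set Implicit Arguments.
Unset Strict Implicit.
Unset Printing Implicit Defensive.

Lemma eval_subst (S : signature) (A : algebra S) (V W : Type) (g : W -> A)
  (s : V -> term S W) (u : term S V) :
  eval g (subst s u) = eval (fun x => eval g (s x)) u.
Proof.
elim: u => [x|o f IH] //=; congr (ops _); apply: functional_extensionality => i.
exact: IH.
Qed.

Lemma eval_ext (S : signature) (A : algebra S) (V : Type) (g1 g2 : V -> A)
  (u : term S V) : (forall x, occurs x u -> g1 x = g2 x) -> eval g1 u = eval g2 u.
Proof.
elim: u => [x|o f IH] /= H; first exact: H.
congr (ops _); apply: functional_extensionality => i.
apply: IH => x Hx; apply: H; by exists i.
Qed.

Lemma occurs_subst (S : signature) (V W : Type) (s : V -> term S W) (u : term S V) x :
  occurs x (subst s u) <-> exists y, occurs y u /\ occurs x (s y).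
Proof.
elim: u => [z|o f IH] /=.
  by split => [H|[y [-> H]]] //; exists z.
split => [[i /IH [y [Hy Hx]]]|[y [[i Hi] Hx]]].
  by exists y; split => //; exists i.
by exists i; apply/IH; exists y.
Qed.

Lemma theta_subst (S : signature) (t : term S 'I_2) (X V : Type) th
  (Hth : is_cong t th) (s1 s2 : V -> term S X) (w : term S V) :
  (forall z, th (s1 z) (s2 z)) -> th (subst s1 w) (subst s2 w).
Proof.
case: Hth => _ _ _ _ Happ H.
elim: w => [z|o f IH] /=; first exact: H.
by apply: Happ => i; apply: IH.
Qed.

Lemma var_exists (S : signature) (HS : plural S) (V : Type) (u : term S V) :
  exists x, occurs x u.
Proof.
elim: u => [x|o f IH]; first by exists x.
case: HS => Hpos _.
have [x Hx] := IH (Ordinal (Hpos o)).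
by exists x; exists (Ordinal (Hpos o)).
Qed.

Definition orA (S : signature) : algebra S :=
  @Algebra S Prop (fun o f => exists i, f i).

Lemma eval_or (S : signature) (V : Type) (g : V -> Prop) (u : term S V) :
  (@eval S (orA S) V g u : Prop) <-> exists x, occurs x u /\ g x.
Proof.
elim: u => [x|o f IH] /=.
  by split => [H|[y [-> H]]] //; exists x.
split => [[i /IH [y [Hy Hx]]]|[y [[i Hi] Hx]]].
  by exists y; split => //; exists i.
by exists i; apply/IH; exists y.
Qed.

Lemma orA_Tp (S : signature) (HS : plural S) (t : term S 'I_2) : in_Tp t (orA S).
Proof.
move=> e [sigma [_ [m [Hm [r [Hr ->]]]]]] g /=.
have K : forall s : term S nat,
    (@eval S (orA S) nat g (emb (subst r s)) : Prop) <-> exists i : 'I_m, g i.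
  move=> s; rewrite eval_or; split.
    move=> [x [/occurs_subst [i [_ /= ->]] Hg]]; by exists i.
  move=> [i Hi]; exists i; split => //.
  apply/occurs_subst; exists i; split => //.
  apply/occurs_subst; have [y Hy] := var_exists HS s; exists y; split => //.
  exact: Hr.
apply: propositional_extensionality.
by rewrite (K sigma.1) (K sigma.2).
Qed.

Lemma rho_occ (S : signature) (HS : plural S) (t : term S 'I_2) (X : Type)
  (u v : term S X) : rho t u v -> forall x, occurs x u <-> occurs x v.
Proof.
move=> H; apply: (H (fun u v => forall x, occurs x u <-> occurs x v)).
  split.
  - by [].
  - by move=> u1 v1 E x; split => /E.
  - by move=> u1 v1 w1 E1 E2 x; rewrite E1 E2.
  - move=> u1 v1 Hf x.
    have E := Hf (orA S) (@orA_Tp S HS t) (fun y => y = x).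
    have Ku : forall w : term S X,
        (@eval S (orA S) X (fun y => y = x) w : Prop) <-> occurs x w.
      move=> w; rewrite eval_or; split => [[y [Hy Hyx]]|Hw]; [by rewrite -Hyx | by exists x].
    by rewrite -Ku E Ku.
  - move=> o f g Hfg x /=; split => [[i Hi]|[i Hi]]; exists i; by apply/Hfg.
move=> e He g x; rewrite !occurs_subst.
split => [[y [Hy Hx]]|[y [Hy Hx]]]; exists y; split => //; by apply/He.
Qed.

Definition cT (X : Type) : Type := X.
Definition ceqb (X : Type) (x y : cT X) : bool :=
  if excluded_middle_informative (x = y) then true else false.
Lemma ceqP (X : Type) : Equality.axiom (@ceqb X).
Proof. by move=> x y; rewrite /ceqb; case: excluded_middle_informative => H; constructor. Qed.
HB.instance Definition _ (X : Type) := hasDecEq.Build (cT X) (@ceqP X).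

Fixpoint vars (S : signature) (X : Type) (u : term S X) : seq X :=
  match u with
  | Var x => [:: x]
  | App o f => flatten [seq vars (f i) | i <- enum 'I_(arity o)]
  end.

Lemma vars_occ (S : signature) (X : Type) (u : term S X) (x : X) :
  occurs x u <-> (x : cT X) \in (vars u : seq (cT X)).
Proof.
elim: u => [y|o f IH] /=.
  by rewrite mem_seq1; split => [->|/eqP].
split => [[i /IH Hi]|/flatten_mapP [i _ /IH Hi]]; last by exists i.
by apply/flatten_mapP; exists i; rewrite ?mem_enum.
Qed.

Lemma key (S : signature) (HS : plural S) (t : term S 'I_2) (X : Type)
  (u v : term S X) :
  (forall x, occurs x u <-> occurs x v) -> free_eq t (tapp t u v) u.
Proof.
move=> Huv B HB g.
pose L : seq (cT X) := undup (vars u : seq (cT X)).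
have HL : forall x : X, occurs x u <-> (x : cT X) \in L.
  by move=> x; rewrite mem_undup -vars_occ.
have [x0 Hx0] := var_exists HS u.
have [n Hn] : exists n, size L = n.+1.
  case E: (size L) => [|n]; last by exists n.
  move: E => /eqP; rewrite size_eq0 => /eqP E.
  by have := (HL x0).1 Hx0; rewrite E.
pose idx := fun x : X => (inord (index (x : cT X) L) : 'I_n.+1).
pose u0 := subst (fun x => Var (idx x)) u.
pose v0 := subst (fun x => Var (idx x)) v.
pose r := fun k : nat => if k == 1 then v0 else u0.
pose h := fun k : nat => g (nth (x0 : cT X) L k).
have Hidx : forall x, occurs x u -> h (idx x) = g x.
  move=> x /HL Hx; rewrite /h /idx inordK; first by rewrite (nth_index (x0 : cT X) Hx).
  by rewrite -Hn index_mem.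
have Eu : eval (fun i : 'I_n.+1 => h i) u0 = eval g u.
  rewrite eval_subst; apply: eval_ext => x Hx /=; exact: Hidx.
have Ev : eval (fun i : 'I_n.+1 => h i) v0 = eval g v.
  rewrite eval_subst; apply: eval_ext => x Hx /=; apply: Hidx; exact/Huv.
have Hocc : forall (i : 'I_(n.+1)) (w : term S X), (forall x, occurs x u <-> occurs x w) ->
    occurs i (subst (fun x => Var (idx x)) w).
  move=> i w Hw; apply/occurs_subst; exists (nth (x0 : cT X) L i); split.
    by apply/Hw/HL; rewrite mem_nth // Hn.
  rewrite /= /idx index_uniq ?undup_uniq ?Hn //.
  by apply: val_inj; rewrite /= inordK.
have Hr : forall k, in_T (r k).
  move=> k i; rewrite /r; case: (k == 1); apply: Hocc => // x.
have E := HB (emb (subst r (emb t)), emb (subst r (Var 0))) _ h.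
have {}E : eval h (emb (subst r (emb t))) = eval h (emb (subst r (Var 0))).
  apply: E; exists (tid t); split; first by move=> B' HB'.
  exists n.+1; split => //; exists r; split => //.
rewrite /emb !eval_subst /= in E.
rewrite /tapp eval_subst -Eu.
rewrite [RHS](_ : _ = eval (fun i : 'I_n.+1 => h i) (r 0)); last first.
  apply: eval_ext => x _ //.
rewrite -E; apply: eval_ext => i _.
by case: i => [[|[|k]] Hk].
Qed.

Theorem lemma4p1 (S : signature) (HS : plural S)
  (t : term S 'I_2) (Ht : in_T t) (X : Type)
  (theta : term S X -> term S X -> Prop) (Htheta : is_cong t theta)
  (a' b' a b : term S X) :
  rho t a a' -> rho t b b' -> theta a' b' -> theta b (tapp t b a).
Proof.
move=> Ha Hb Hab.
have Oa := rho_occ HS Ha; have Ob := rho_occ HS Hb.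
have tappC : forall u1 u2 v1 v2, theta u1 u2 -> theta v1 v2 ->
    theta (tapp t u1 v1) (tapp t u2 v2).
  move=> u1 u2 v1 v2 H1 H2; apply: (theta_subst Htheta) => z.
  by case: (nat_of_ord z == 0).
have occ_tapp : forall u v x, occurs x (tapp t u v) <-> occurs x u \/ occurs x v.
  move=> u v x; rewrite /tapp; split.
    by move=> /occurs_subst [z [_]]; case: (nat_of_ord z == 0); [left|right].
  case=> H; apply/occurs_subst.
    by exists ord0; split; [exact: Ht|].
  by exists (@Ordinal 2 1 isT); split; [exact: Ht|].
case: Htheta => Hrefl Hsym Htrans Hfree Happ.
have s1 : theta b (tapp t b a').
  apply: (Htrans _ (tapp t b b')).
    by apply: Hsym; apply: Hfree; apply: key => // x; rewrite Ob.
  by apply: tappC => //; apply: Hsym.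
have s2 : theta a (tapp t a b').
  apply: (Htrans _ (tapp t a a')).
    by apply: Hsym; apply: Hfree; apply: key => // x; rewrite Oa.
  by apply: tappC.
have s3 := tappC _ _ _ _ s1 s2.
have s4 : free_eq t (tapp t (tapp t b a') (tapp t a b')) (tapp t b a').
  apply: key => // x; rewrite !occ_tapp Oa Ob; tauto.
apply: (Hsym); apply: (Htrans _ _ _ s3).
apply: (Htrans _ _ _ (Hfree _ _ s4)).
exact: Hsym.
Qed.
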